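(* For every non negative integer $r \geq 0$, every tuning parameter $\lambda \geq 0$ and every data vector $y \in \mathbb{R}^n$, the boundary-point estimators at the last point $n$ are well defined, i.e. $$\max_{J \in \mathcal{I}: n \in J} \min_{I \in \mathcal{I}: n \in I, I \subseteq J} \Big[(P^{(|I|,r)} y_{I})_n + \frac{\lambda C_{I,J}}{|I|}\Big] \leq \min_{J \in \mathcal{I}: n \in J} \max_{I \in \mathcal{I}: n \in I, I \subseteq J} \Big[(P^{(|I|,r)} y_{I})_n - \frac{\lambda C_{I,J}}{|I|}\Big],$$ and likewise for the dyadic version $$\max_{J \in \mathcal{D}_n} \min_{I \in \mathcal{D}_n: I \subseteq J} \Big[(P^{(|I|,r)} y_{I})_n + \frac{\lambda C_{I,J}}{|I|}\Big] \leq \min_{J \in \mathcal{D}_n} \max_{I \in \mathcal{D}_n: I \subseteq J} \Big[(P^{(|I|,r)} y_{I})_n - \frac{\lambda C_{I,J}}{|I|}\Big].$$ Hence any value $\hat{\theta}^{(r,\lambda)}_n$ (resp. $\hat{\theta}^{(dyad,r,\lambda)}_n$) lying between the left and right hand sides exists. The proof is similar to that of the well-posedness of (interior) Minmax Trend Filtering.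
   Context: Data $y \in \mathbb{R}^n$. $\mathcal{I}$ is the set of all discrete intervals $[a:b]=\{a,\dots,b\}$, $1 \le a \le b \le n$; $y_I$ is the restriction of $y$ to $I$. For an interval $I$, $P^{(|I|,r)}$ is the orthogonal projection matrix onto the subspace of vectors in $\mathbb{R}^{|I|}$ that are restrictions to $I$ of discrete polynomial vectors $(f(1/n),\dots,f(n/n))$ with $f$ a polynomial of degree $r$; $(P^{(|I|,r)} y_I)_n$ denotes the entry of the fitted local polynomial regression on $y_I$ at location $n$. Here all intervals considered contain the last point $n$, and $C_{I,J} = 1$ if $I \neq J$ and $C_{I,J} = -1$ if $I = J$. $\mathcal{D}_n$ is the set of dyadified intervals $[l:r]$ with $l \in \mathcal{L}_n$, $r \in \mathcal{R}_n$, where (identifying dyadic intervals of $[n]$ with nodes of a complete binary tree) $\mathcal{R}_n=\{n\}$ and $\mathcal{L}_n=\{l_0,l_1,\dots\}$ is built by $l_0 = n$ and, if $l_j \neq 1$ is the left end point of a dyadic interval at level $-j$: if that node is a right child, $l_{j+1}$ is the left end point of its parent; if it is a left child, $l_{j+1}$ is the left end point of the left neighbor of its parent; stop when $l_j=1$. *)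

(* Defs.v *)
From HB Require Import structures.
From mathcomp Require Import all_boot all_order all_algebra.
Set Implicit Arguments. Unset Strict Implicit. Unset Printing Implicit Defensive.
Import Order.TTheory GRing.Theory Num.Theory.
Local Open Scope ring_scope.

Section MinmaxDefs.
Variable R : realFieldType.

(* Maximum / minimum of a (nonempty) finite list of reals.  The default 0 on
   the empty list is never used in lemma8: all index lists are nonempty. *)
Definition seqmax (s : seq R) : R :=
  if s is x :: s' then foldr Num.max x s' else 0.
Definition seqmin (s : seq R) : R :=
  if s is x :: s' then foldr Num.min x s' else 0.

(* Data y in R^n, indexed 1..n; [yat y i] is y_i (1-based). *)
Definition yat (n : nat) (y : 'rV[R]_n) (i : nat) : R :=
  if insub i.-1 is Some j then y 0 j else 0.

(* All intervals considered contain the last point n, hence are of the form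
   [a:n] with 1 <= a <= n; they are represented by their left end point a.
   |[a:n]| = n - a + 1. *)

(* Design matrix of [a:n]: row j (j = 0..r), column k (k = 0..n-a) is
   ((a+k)/n)^j, so its row space is the set of restrictions to [a:n] of
   discrete polynomial vectors (f(1/n),...,f(n/n)), deg f <= r. *)
Definition design (r n a : nat) : 'M[R]_(r.+1, (n - a).+1) :=
  \matrix_(j < r.+1, k < (n - a).+1) (((a + k)%:R / n%:R) ^+ j).

Definition orth_proj (p m : nat) (X : 'M[R]_(p, m)) : 'M[R]_m :=
  proj_mx (<<X>>%MS) (kermx X^T).

(* (P^{(|I|,r)} y_I)_n for I = [a:n]: last entry of the projection of y_I. *)
Definition local_fit (r n : nat) (y : 'rV[R]_n) (a : nat) : R :=
  ((\row_(k < (n - a).+1) yat y (a + k)) *m orth_proj (design r n a))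
    0 ord_max.

(* C_{I,J} for I = [b:n], J = [a:n]. *)
Definition Cij (b a : nat) : R := if b == a then -1 else 1.

End MinmaxDefs.

Local Close Scope ring_scope.

(* Dyadic intervals at level
   -j are [m 2^j + 1 : (m+1) 2^j]; such a node with left end point l is a
   right child iff ((l-1) / 2^j) is odd.  l_0 = n; if l_j <> 1:
   right child  -> l_{j+1} = l_j - 2^j      (left end point of the parent)
   left child   -> l_{j+1} = l_j - 2^(j+1)  (left end point of the parent's
                                             left neighbour);
   stop when l_j = 1.  [fuel] bounds the number of steps (l strictly
   decreases, so fuel n suffices). *)
Fixpoint dyad_left_aux (fuel j l : nat) : seq nat :=
  l :: (if fuel is fuel'.+1 then
          if l == 1%N then [::]
          else dyad_left_aux fuel' j.+1
                 (if odd ((l - 1) %/ 2 ^ j) then l - 2 ^ j else l - 2 ^ j.+1)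
        else [::]).

Definition dyad_left (n : nat) : seq nat := dyad_left_aux n 0 n.

Arguments local_fit {R} r {n} y a.
Arguments Cij {R} b a.

(* Main.v *)
Require Import Defs.
From HB Require Import structures.
From mathcomp Require Import all_boot all_order all_algebra.
From mathcomp Require Import zify ring lra.
Import Order.TTheory GRing.Theory Num.Theory.
Local Open Scope ring_scope.

Set Implicit Arguments.
Section Aux.
Variable R : realFieldType.

Lemma seqmax_le (s : seq (R)) c : s != [::] -> (forall x, x \in s -> x <= c) -> seqmax s <= c.
Proof.
case: s => [//|x s] _ H /=.
have: x <= c by apply: H; rewrite inE eqxx.
have: forall z, z \in s -> z <= c by move=> z zs; apply: H; rewrite inE zs orbT.
elim: s {H} => [|z s IH] Hs Hx //=.
rewrite ge_max (Hs z) ?inE ?eqxx //=; apply: IH => // w ws; by apply: Hs; rewrite inE ws orbT.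
Qed.

Lemma le_seqmin (s : seq (R)) c : s != [::] -> (forall x, x \in s -> c <= x) -> c <= seqmin s.
Proof.
case: s => [//|x s] _ H /=.
have: c <= x by apply: H; rewrite inE eqxx.
have: forall z, z \in s -> c <= z by move=> z zs; apply: H; rewrite inE zs orbT.
elim: s {H} => [|z s IH] Hs Hx //=.
rewrite le_min (Hs z) ?inE ?eqxx //=; apply: IH => // w ws; by apply: Hs; rewrite inE ws orbT.
Qed.

Lemma seqmin_le (s : seq R) x : x \in s -> seqmin s <= x.
Proof.
case: s => [//|z s] /=.
move: x; elim: s z => [|w s IH] z x; first by rewrite inE => /eqP ->.
rewrite /= !inE => /orP[/eqP->|/orP[/eqP->|xs]].
- by rewrite ge_min (IH z z) ?orbT // inE eqxx.
- by rewrite ge_min lexx.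
- rewrite ge_min; apply/orP; right; apply: (IH z x); by rewrite inE xs orbT.
Qed.

Lemma le_seqmax (s : seq R) x : x \in s -> x <= seqmax s.
Proof.
case: s => [//|z s] /=.
move: x; elim: s z => [|w s IH] z x; first by rewrite inE => /eqP ->.
rewrite /= !inE => /orP[/eqP->|/orP[/eqP->|xs]].
- by rewrite le_max (IH z z) ?orbT // inE eqxx.
- by rewrite le_max lexx.
- rewrite le_max; apply/orP; right; apply: (IH z x); by rewrite inE xs orbT.
Qed.

Lemma key (L : seq nat) (S : nat -> seq nat) (F G : nat -> nat -> R) :
  L != [::] ->
  (forall a1 a2, a1 \in L -> a2 \in L ->
     exists b, [/\ b \in S a1, b \in S a2 & F a1 b <= G a2 b]) ->
  seqmax [seq seqmin [seq F a b | b <- S a] | a <- L] <=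
  seqmin [seq seqmax [seq G a b | b <- S a] | a <- L].
Proof.
move=> L0 H.
have L0' : forall (f : nat -> R), [seq f a | a <- L] != [::].
  by move=> f; case: L L0 {H}.
apply: seqmax_le => // u /mapP [a1 a1L ->].
apply: le_seqmin => // v /mapP [a2 a2L ->].
have [b [b1 b2 Hb]] := H a1 a2 a1L a2L.
apply: (le_trans (seqmin_le _ _ (map_f (F a1) b1))).
apply: (le_trans Hb).
exact: le_seqmax _ _ (map_f (G a2) b2).
Qed.

Lemma term_le (n : nat) (f : nat -> R) (lambda : R) (hl : 0 <= lambda) a1 a2 :
  f (maxn a1 a2) + lambda * Cij (maxn a1 a2) a1 / (n - maxn a1 a2).+1%:R <=
  f (maxn a1 a2) - lambda * Cij (maxn a1 a2) a2 / (n - maxn a1 a2).+1%:R.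
Proof.
rewrite lerD2l.
set k := (n - maxn a1 a2).+1%:R.
have kp : 0 <= lambda / k :> R by rewrite divr_ge0 // ler0n.
rewrite (mulrAC lambda (Cij _ a1)) (mulrAC lambda (Cij _ a2)).
move: kp; set t := lambda / k => kp.
rewrite /Cij.
case: (leqP a1 a2) => h.
- rewrite eqxx.
  case: eqP => _; lra.
- rewrite eqxx.
  case: eqP => _; lra.
Qed.

End Aux.

Theorem lemma8 (R : realFieldType) (n : nat) (hn : (0 < n)%N) (r : nat)
    (lambda : R) (hl : 0 <= lambda) (y : 'rV[R]_n) :
  (* all intervals J = [a:n] containing n, sub-intervals I = [b:n], a <= b *)
  seqmax [seq seqmin [seq local_fit r y b + lambda * Cij b a / (n - b).+1%:R
                     | b <- iota a (n - a).+1]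
         | a <- iota 1 n]
  <=
  seqmin [seq seqmax [seq local_fit r y b - lambda * Cij b a / (n - b).+1%:R
                     | b <- iota a (n - a).+1]
         | a <- iota 1 n]
  /\
  (* dyadified intervals D_n = {[l:n] : l \in L_n} *)
  seqmax [seq seqmin [seq local_fit r y b + lambda * Cij b a / (n - b).+1%:R
                     | b <- dyad_left n & (a <= b)%N]
         | a <- dyad_left n]
  <=
  seqmin [seq seqmax [seq local_fit r y b - lambda * Cij b a / (n - b).+1%:R
                     | b <- dyad_left n & (a <= b)%N]
         | a <- dyad_left n].
Proof.
split.
- apply: (@key R _ (fun a => iota a (n - a).+1)
     (fun a b => local_fit r y b + lambda * Cij b a / (n - b).+1%:R)
     (fun a b => local_fit r y b - lambda * Cij b a / (n - b).+1%:R)).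
    by rewrite -size_eq0 size_iota -lt0n.
  move=> a1 a2; rewrite !mem_iota => /andP[h1 h1'] /andP[h2 h2'].
  exists (maxn a1 a2); split; last exact: term_le.
  + rewrite mem_iota leq_maxl /=; rewrite gtn_max; apply/andP; split; lia.
  + rewrite mem_iota leq_maxr /=; rewrite gtn_max; apply/andP; split; lia.
- apply: (@key R _ (fun a => [seq b <- dyad_left n | (a <= b)%N])
     (fun a b => local_fit r y b + lambda * Cij b a / (n - b).+1%:R)
     (fun a b => local_fit r y b - lambda * Cij b a / (n - b).+1%:R)).
    by rewrite /dyad_left; case: (n).
  move=> a1 a2 h1 h2.
  have hb : maxn a1 a2 \in dyad_left n.
    by case: (leqP a1 a2).
  exists (maxn a1 a2); split; last exact: term_le.
  + by rewrite mem_filter leq_maxl.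
  + by rewrite mem_filter leq_maxr.
Qed.
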